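(* Let $G$ be a connected graph, let $L$ be a list-assignment with $|L(u)|\ge\deg(u)+1$ for all $u\in V(G)$, and let $\alpha,\beta$ be two unfrozen $L$-colourings. For each vertex $w$, there exists a recolouring sequence $\mathcal{S}$ from $\alpha$ to some $L$-colouring $\gamma$ such that (i) either $\gamma(w)=\beta(w)$, or there is precisely one vertex $x\in N(w)$ with $\gamma(x)=\beta(w)$ and both $w$ and $x$ are frozen under $\gamma$; and (ii) $|\mathcal{S}|\le\deg(w)+2$, with equality only if $\gamma(w)=\beta(w)$.
   Context: An $L$-colouring is a proper colouring $\varphi$ with $\varphi(v)\in L(v)$ for all $v$. A recolouring sequence is a sequence of single-vertex recolouring steps, each changing the colour of one vertex to another colour of its list so that the colouring remains proper; $|\mathcal{S}|$ is its number of steps. A vertex $u$ is frozen under $\varphi$ if every colour of $L(u)\setminus\{\varphi(u)\}$ appears on a neighbour of $u$; a colouring is unfrozen if at least one vertex is unfrozen under it. *)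

(* Defs.v *)
From mathcomp Require Import all_boot.
Set Implicit Arguments. Unset Strict Implicit. Unset Printing Implicit Defensive.

Section Defs.
Variables (V C : finType) (e : rel V) (L : V -> {set C}).

Definition simple_graph := symmetric e /\ irreflexive e.
Definition connected_graph := forall x y : V, connect e x y.
Definition deg (u : V) : nat := #|[set v | e u v]|.

Definition is_Lcol (phi : {ffun V -> C}) : bool :=
  [forall u, phi u \in L u] && [forall u, forall v, e u v ==> (phi u != phi v)].

Definition recol_step (f g : {ffun V -> C}) : bool :=
  [exists v, (f v != g v) && [forall u, (u != v) ==> (f u == g u)]] && is_Lcol g.

(* s is a recolouring sequence from alpha to gamma; |S| = size s *)
Definition recol_seq (alpha gamma : {ffun V -> C}) (s : seq {ffun V -> C}) : Prop :=
  path recol_step alpha s /\ last alpha s = gamma.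

Definition frozen (phi : {ffun V -> C}) (u : V) : Prop :=
  forall c, c \in L u -> c != phi u -> exists v, e u v /\ phi v = c.

Definition unfrozen_col (phi : {ffun V -> C}) : Prop := exists u, ~ frozen phi u.
End Defs.

(* Main.v *)
Require Import Defs.
From mathcomp Require Import all_boot.
From mathcomp Require Import zify.
Set Implicit Arguments. Unset Strict Implicit. Unset Printing Implicit Defensive.

Section Proof.
Variables (V C : finType) (e : rel V) (L : V -> {set C}).
Hypothesis esym : symmetric e.
Hypothesis eirr : irreflexive e.
Hypothesis hdeg : forall u, deg e u + 1 <= #|L u|.

Definition frozenb (phi : {ffun V -> C}) u :=
  [forall c, (c \in L u) ==> (c != phi u) ==> [exists v, e u v && (phi v == c)]].

Lemma frozenP phi u : reflect (frozen e L phi u) (frozenb phi u).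
Proof.
apply: (iffP forallP) => [H c cL cn | H c].
  have := H c; rewrite cL cn /= => /existsP [v /andP [euv /eqP]]; by exists v.
apply/implyP => cL; apply/implyP => cn; have [v [euv pv]] := H c cL cn.
by apply/existsP; exists v; rewrite euv pv eqxx.
Qed.

Lemma frozen_props phi u : frozen e L phi u ->
  {in [set v | e u v], forall v, phi v \in L u} /\ {in [set v | e u v] &, injective phi}.
Proof.
move=> Hf.
set N := [set v | e u v].
have sub : L u :\ phi u \subset phi @: N.
  apply/subsetP => c; rewrite !inE => /andP [cn cL].
  have [v [euv pv]] := Hf c cL cn. by apply/imsetP; exists v; rewrite ?inE.
have c1 : #|phi @: N| <= #|N| := leq_imset_card _ _.
have c2 : #|N| <= #|L u :\ phi u|.
  have := hdeg u; rewrite /deg -/N.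
  have := cardsD1 (phi u) (L u). have := leq_b1 (phi u \in L u). lia.
have c3 : #|L u :\ phi u| <= #|phi @: N| := subset_leq_card sub.
have eq : L u :\ phi u = phi @: N.
  apply/eqP; rewrite eqEcard sub /=; lia.
split.
  move=> v vN. have : phi v \in phi @: N by apply/imsetP; exists v.
  by rewrite -eq inE => /andP [].
apply/imset_injP; apply/eqP; lia.
Qed.

Lemma col_ne phi u v : is_Lcol e L phi -> e u v -> phi u != phi v.
Proof.
by move=> /andP [_ /forallP HP] euv; have := HP u => /forallP /(_ v) /implyP; apply.
Qed.

Lemma col_in phi u : is_Lcol e L phi -> phi u \in L u.
Proof. by move=> /andP [/forallP HL _]. Qed.

Definition upd (phi : {ffun V -> C}) v d : {ffun V -> C} :=
  [ffun u => if u == v then d else phi u].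

Lemma upd_step phi v d : is_Lcol e L phi -> d \in L v -> d != phi v ->
  (forall u, e v u -> phi u != d) ->
  recol_step e L phi (upd phi v d) /\ is_Lcol e L (upd phi v d).
Proof.
move=> Hc dL dn Hn.
have Hc' : is_Lcol e L (upd phi v d).
  apply/andP; split.
    apply/forallP => u; rewrite ffunE; case: eqP => [->|_] //; exact: col_in.
  apply/forallP => x; apply/forallP => y; apply/implyP => exy; rewrite !ffunE.
  case: (eqVneq x v) => [exv|nxv]; case: (eqVneq y v) => [eyv|nyv].
  - by subst; rewrite eirr in exy.
  - subst x. by rewrite eq_sym; apply: Hn.
  - subst y. by apply: Hn; rewrite esym.
  - exact: col_ne.
split => //; apply/andP; split => //.
apply/existsP; exists v; rewrite ffunE eqxx eq_sym dn /=.
apply/forallP => u; apply/implyP => nuv; by rewrite ffunE (negPf nuv).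
Qed.

Lemma frozen_local (phi phi' : {ffun V -> C}) u : phi' u = phi u -> (forall v, e u v -> phi' v = phi v) ->
  frozen e L phi u -> frozen e L phi' u.
Proof.
move=> hu hN Hf c cL cn; rewrite hu in cn; have [v [euv pv]] := Hf c cL cn.
by exists v; rewrite hN.
Qed.

Definition K w (phi : {ffun V -> C}) c := [set x | e w x && (phi x == c)].

Lemma K_upd_out w (phi : {ffun V -> C}) c x d : phi x = c -> d != c -> K w (upd phi x d) c = K w phi c :\ x.
Proof.
move=> px dn; apply/setP => y; rewrite !inE ffunE.
case: (eqVneq y x) => [->|nyx] //=; by rewrite (negPf dn) andbF.
Qed.

Lemma K_upd_w w (phi : {ffun V -> C}) c b : K w (upd phi w b) c = K w phi c.
Proof.
apply/setP => y; rewrite !inE ffunE.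
case: (eqVneq y w) => [->|nyw] //=; by rewrite eirr.
Qed.

Lemma unfrozen_free (phi : {ffun V -> C}) x : ~~ frozenb phi x ->
  exists d, [/\ d \in L x, d != phi x & forall v, e x v -> phi v != d].
Proof.
rewrite negb_forall => /existsP [d].
case dL: (d \in L x) => //=; case dn: (d != phi x) => //= Hd.
exists d; split => // v exv; apply/negP => pv; move/negP: Hd; apply.
by apply/existsP; exists v; rewrite exv pv.
Qed.

Lemma lemB w c : forall n phi, is_Lcol e L phi -> c \in L w -> #|K w phi c| = n ->
  (forall x, e w x -> phi x = c -> ~ frozen e L phi x) ->
  exists gamma s, [/\ path (recol_step e L) phi s, last phi s = gamma, gamma w = c
    & size s <= n.+1].
Proof.
elim=> [|n IH] phi Hc cL Hk Hu.
  case: (eqVneq (phi w) c) => [pw|pw]; first by exists phi, [::].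
  have Hn : forall u, e w u -> phi u != c.
    move=> u ewu; apply/negP => /eqP pu.
    have : 0 < #|K w phi c| by apply/card_gt0P; exists u; rewrite inE ewu pu eqxx.
    by rewrite Hk.
  have pw' : c != phi w by rewrite eq_sym.
  have [st _] := upd_step Hc cL pw' Hn.
  exists (upd phi w c), [:: upd phi w c]; by rewrite /= st ffunE eqxx.
have : 0 < #|K w phi c| by rewrite Hk.
rewrite card_gt0 => /set0Pn [x]; rewrite inE => /andP [ewx /eqP px].
have /unfrozen_free [d [dL dn Hd]] : ~~ frozenb phi x by apply/frozenP; exact: Hu.
have [st Hc'] := upd_step Hc dL dn Hd.
have dc : d != c by rewrite -px.
have Hk' : #|K w (upd phi x d) c| = n.
  have := cardsD1 x (K w phi c); rewrite K_upd_out // inE ewx px eqxx Hk /=; lia.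
have Hu' : forall y, e w y -> upd phi x d y = c -> ~ frozen e L (upd phi x d) y.
  move=> y ewy; rewrite ffunE; case: (eqVneq y x) => [->|nyx]; first by move/eqP; rewrite (negPf dc).
  move=> py Hf; apply: (Hu y ewy py); apply: (frozen_local (phi := upd phi x d)) Hf.
    by rewrite ffunE (negPf nyx).
  move=> v eyv; rewrite ffunE; case: (eqVneq v x) => [evx|] //.
  subst v; have := col_ne Hc eyv; by rewrite py px eqxx.
have [gamma [s [p1 p2 p3 p4]]] := IH _ Hc' cL Hk' Hu'.
exists gamma, (upd phi x d :: s); split => //=; by rewrite st.
Qed.

Lemma lemA w c : forall n phi, is_Lcol e L phi -> c \in L w -> phi w != c ->
  #|K w phi c| = n ->
  exists gamma s, [/\ path (recol_step e L) phi s, last phi s = gamma,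
   (gamma w = c \/ exists x, e w x /\ gamma x = c /\
      (forall y, e w y -> gamma y = c -> y = x) /\ frozen e L gamma w /\ frozen e L gamma x),
   size s <= n + 2 & (size s = n + 2 -> gamma w = c)].
Proof.
elim=> [|n IH] phi Hc cL pw Hk.
  have Hu : forall x, e w x -> phi x = c -> ~ frozen e L phi x.
    move=> u ewu pu; have : 0 < #|K w phi c| by apply/card_gt0P; exists u; rewrite inE ewu pu eqxx.
    by rewrite Hk.
  have [gamma [s [p1 p2 p3 p4]]] := lemB Hc cL Hk Hu.
  exists gamma, s; split => //; first by left.
  all: try lia; try by move=> _.
case: (boolP [exists x, e w x && (phi x == c) && ~~ frozenb phi x]).
  move=> /existsP [x /andP [/andP [ewx /eqP px] nf]].
  have /unfrozen_free [d [dL dn Hd]] := nf.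
  have [st Hc'] := upd_step Hc dL dn Hd.
  have dc : d != c by rewrite -px.
  have Hk' : #|K w (upd phi x d) c| = n.
    have := cardsD1 x (K w phi c); rewrite K_upd_out // inE ewx px eqxx Hk /=; lia.
  have nxw : w != x by apply/eqP => ewx'; subst x; rewrite eirr in ewx.
  have pw' : upd phi x d w != c by rewrite ffunE (negPf nxw).
  have [gamma [s [p1 p2 p3 p4 p5]]] := IH _ Hc' cL pw' Hk'.
  exists gamma, (upd phi x d :: s); split => //=.
  - by rewrite st.
  - move=> /eqP; rewrite addSn eqSS => /eqP hs; exact: p5.
move=> /negP Hall0.
have Hall : forall x, ~~ (e w x && (phi x == c) && ~~ frozenb phi x).
  by move=> x; apply/negP => hx; apply: Hall0; apply/existsP; exists x.
have Hfz : forall x, e w x -> phi x = c -> frozen e L phi x.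
  move=> x ewx px; have := Hall x; rewrite ewx px eqxx /= negbK; by move/frozenP.
have : 0 < #|K w phi c| by rewrite Hk.
rewrite card_gt0 => /set0Pn [x]; rewrite inE => /andP [ewx /eqP px].
case: (boolP (frozenb phi w)) => [/frozenP fw | nfw].
  exists phi, [::]; split => //; try (move=> /= h; lia).
  right; exists x; split => //; split => //; split; last by split => //; apply: Hfz.
  move=> y ewy py; have [_ inj] := frozen_props fw.
  by apply: inj; rewrite ?inE // py px.
have /unfrozen_free [b [bL bn Hb]] := nfw.
have [st Hc1] := upd_step Hc bL bn Hb.
have Hk1 : #|K w (upd phi w b) c| = n.+1 by rewrite K_upd_w.
have Hu1 : forall y, e w y -> upd phi w b y = c -> ~ frozen e L (upd phi w b) y.
  move=> y ewy; rewrite ffunE; case: (eqVneq y w) => [eyw|nyw].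
    by subst y; rewrite eirr in ewy.
  move=> py Hf1; have fy := Hfz y ewy py.
  have [inL inj] := frozen_props fy.
  have eyw : e y w by rewrite esym.
  have aL : phi w \in L y by apply: inL; rewrite inE.
  have an : phi w != upd phi w b y by rewrite ffunE (negPf nyw) py.
  have [v [eyv pv]] := Hf1 _ aL an.
  move: pv; rewrite ffunE; case: (eqVneq v w) => [evw|nvw] pv.
    by move: bn; rewrite pv eqxx.
  apply: (negP nvw); apply/eqP; apply: inj => //; by rewrite inE.
have [gamma [s [p1 p2 p3 p4]]] := lemB Hc1 cL Hk1 Hu1.
exists gamma, (upd phi w b :: s); split => //=; [by rewrite st | by left | lia].
Qed.

End Proof.

Theorem mainTheorem6 (V C : finType) (e : rel V) (L : V -> {set C})
  (alpha beta : {ffun V -> C}) (w : V) :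
  simple_graph e -> connected_graph e ->
  (forall u, deg e u + 1 <= #|L u|) ->
  is_Lcol e L alpha -> is_Lcol e L beta ->
  unfrozen_col e L alpha -> unfrozen_col e L beta ->
  exists (gamma : {ffun V -> C}) (s : seq {ffun V -> C}),
    recol_seq e L alpha gamma s /\
    (gamma w = beta w \/
     exists x, e w x /\ gamma x = beta w /\
       (forall y, e w y -> gamma y = beta w -> y = x) /\
       frozen e L gamma w /\ frozen e L gamma x) /\
    size s <= deg e w + 2 /\
    (size s = deg e w + 2 -> gamma w = beta w).
Proof.
move=> [esym eirr] _ hdeg Ha Hb _ _.
case: (eqVneq (alpha w) (beta w)) => [aw|aw].
  exists alpha, [::]; split; first by [].
  split; first by left. split => //= h; lia.
have cL := @col_in V C e L beta w Hb.
have [gamma [s [p1 p2 p3 p4 p5]]] := @lemA V C e L esym eirr hdeg w (beta w) _ alpha Ha cL aw (erefl _).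
have kd : #|K e w alpha (beta w)| <= deg e w.
  apply: subset_leq_card; apply/subsetP => y; rewrite !inE => /andP [].
  by [].
exists gamma, s; split; first by [].
split => //; split; first lia.
move=> h; apply: p5; lia.
Qed.
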